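(* Let $R$ be a ring, $I$ an ideal of $R$, and $A$ an $R$-algebra which is $I$-adically complete and separated with $A/I^nA$ smooth over $R/I^n$ for all $n\ge1$. Let $\alpha\in A$ be $I$-adically nilpotent, let $T_1,\dots,T_d\in A$ be such that $d(T_i\bmod IA)$ form a basis of $\Omega_{(A/IA)/(R/I)}$, and let $a_1,\dots,a_d\in A$. Then there exists a unique $\alpha$-derivation $\partial$ of $A$ over $R$ with $\partial(T_i)=a_i$ for all $i$.
   Context: An $\alpha$-derivation of an $R$-algebra $A$ over $R$ ($\alpha\in A$) is an $R$-linear map $\partial:A\to A$ with $\partial(1)=0$ and $\partial(xy)=\partial(x)y+x\partial(y)+\alpha\partial(x)\partial(y)$ for all $x,y$. *)

(* Defs.v *)
From HB Require Import structures.
From mathcomp Require Import all_boot all_algebra.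
From mathcomp Require Import mpoly.
Set Implicit Arguments. Unset Strict Implicit. Unset Printing Implicit Defensive.
Import GRing.Theory.
Local Open Scope ring_scope.

Definition is_ideal (T : comPzRingType) (S : T -> Prop) : Prop :=
  S 0 /\ (forall x y, S x -> S y -> S (x + y)) /\ (forall r x, S x -> S (r * x)).

Section Defs.
Variables (R : comNzRingType) (A : comPzRingType) (f : {rmorphism R -> A}).

Definition ideal_pow (I : R -> Prop) (n : nat) (x : R) : Prop :=
  exists (m : nat) (c : 'I_m -> R) (g : 'I_m -> 'I_n -> R),
    (forall k j, I (g k j)) /\ x = \sum_(k < m) c k * \prod_(j < n) g k j.

Definition ext_pow (I : R -> Prop) (n : nat) (x : A) : Prop :=
  exists (m : nat) (a : 'I_m -> A) (g : 'I_m -> 'I_n -> R),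
    (forall k j, I (g k j)) /\ x = \sum_(k < m) f (\prod_(j < n) g k j) * a k.

Definition adic_separated (I : R -> Prop) : Prop :=
  forall x : A, (forall n, ext_pow I n x) -> x = 0.

(* I-adically complete: every I-adic Cauchy sequence converges
   (i.e. A -> lim A/I^nA is surjective). *)
Definition adic_complete (I : R -> Prop) : Prop :=
  forall u : nat -> A, (forall n, ext_pow I n (u n.+1 - u n)) ->
    exists x : A, forall n, ext_pow I n (x - u n).

Definition adic_nilpotent (I : R -> Prop) (alpha : A) : Prop :=
  forall n, exists m, ext_pow I n (alpha ^+ m).

(* Evaluation of p in R[X_0..X_{n-1}] at x : 'I_n -> A through f
   (this is mpoly's [mmap f x p], written for a possibly trivial ring A). *)
Definition ev (n : nat) (x : 'I_n -> A) (p : {mpoly R[n]}) : A :=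
  \sum_(m <- msupp p) f p@_m * \prod_(i < n) x i ^+ m i.

(* Below, K is an ideal of R and J an ideal of A containing f(K)A;
   the statements concern the (R/K)-algebra A/J. *)

(* A/J is formally smooth over R/K: for every (R/K)-algebra C (i.e. an
   R-algebra fC : R -> C killing K) and square-zero ideal N of C, every
   (R/K)-algebra map A/J -> C/N lifts to an (R/K)-algebra map A/J -> C.
   Maps A/J -> C/N are represented by set-theoretic lifts g : A -> C that
   are algebra morphisms modulo N and send J into N. *)
Definition formally_smooth_quot (K : R -> Prop) (J : A -> Prop) : Prop :=
  forall (C : comPzRingType) (fC : {rmorphism R -> C}) (N : C -> Prop),
    (forall r, K r -> fC r = 0) -> is_ideal N ->
    (forall x y, N x -> N y -> x * y = 0) ->
    forall g : A -> C,
      (forall x, J x -> N (g x)) ->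
      (forall x y, N (g (x + y) - (g x + g y))) ->
      (forall x y, N (g (x * y) - g x * g y)) ->
      (forall r, N (g (f r) - fC r)) ->
      exists h : A -> C,
        [/\ forall x y, h (x + y) = h x + h y,
            forall x y, h (x * y) = h x * h y,
            forall r, h (f r) = fC r,
            forall x, J x -> h x = 0
          & forall x, N (h x - g x)].

(* A/J is of finite presentation over R/K: there are x_1..x_n in A
   generating A/J as an (R/K)-algebra, such that the kernel of
   (R/K)[X_1..X_n] -> A/J is finitely generated, i.e. the kernel of
   R[X] -> A/J is K R[X] + (q_1,...,q_m). *)
Definition fin_pres_quot (K : R -> Prop) (J : A -> Prop) : Prop :=
  exists (n : nat) (x : 'I_n -> A),
    (forall a : A, exists p : {mpoly R[n]}, J (a - ev x p)) /\
    exists (m : nat) (q : 'I_m -> {mpoly R[n]}),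
      (forall j, J (ev x (q j))) /\
      forall p : {mpoly R[n]}, J (ev x p) ->
        exists c : 'I_m -> {mpoly R[n]},
          forall mo, K (p - \sum_(j < m) c j * q j)@_mo.

Definition smooth_quot (K : R -> Prop) (J : A -> Prop) : Prop :=
  formally_smooth_quot K J /\ fin_pres_quot K J.

(* D : A -> M is (the pull-back of) an (R/I)-derivation of A/IA into the
   (A/IA)-module M. *)
Definition is_der (I : R -> Prop) (M : lmodType A) (D : A -> M) : Prop :=
  [/\ forall x y, D (x + y) = D x + D y,
      forall r x, D (f r * x) = f r *: D x,
      forall x y, D (x * y) = x *: D y + y *: D x
    & forall x, ext_pow I 1 x -> D x = 0].

(* d(T_i mod IA) form a basis of Omega_{(A/IA)/(R/I)}, expressed through the
   defining universal property of Omega (Hom(Omega, M) = Der(A/IA, M)):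
   for every (A/IA)-module M and m_1..m_d in M there is a unique
   (R/I)-derivation D : A/IA -> M with D(T_i) = m_i. *)
Definition kahler_basis (I : R -> Prop) (d : nat) (T : 'I_d -> A) : Prop :=
  forall (M : lmodType A),
    (forall (x : A) (v : M), ext_pow I 1 x -> x *: v = 0) ->
    forall mm : 'I_d -> M,
      exists D : A -> M,
        [/\ is_der I D, forall i, D (T i) = mm i
          & forall D' : A -> M, is_der I D' -> (forall i, D' (T i) = mm i) ->
              forall x, D' x = D x].

Definition alpha_derivation (alpha : A) (dd : A -> A) : Prop :=
  [/\ forall x y, dd (x + y) = dd x + dd y,
      forall r x, dd (f r * x) = f r * dd x,
      dd 1 = 0
    & forall x y, dd (x * y) = dd x * y + x * dd y + alpha * dd x * dd y].

End Defs.

(* Main.v *)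
Require Import Defs.
From HB Require Import structures.
From mathcomp Require Import all_boot all_algebra.
From mathcomp Require Import mpoly.
From mathcomp Require Import boolp.
From mathcomp Require Import ring.
Set Implicit Arguments. Unset Strict Implicit. Unset Printing Implicit Defensive.
Import GRing.Theory.
Local Open Scope ring_scope.

Record subgrp (V : zmodType) (S : V -> Prop) : Prop := SubGrp {
  sg0 : S 0; sgD : forall x y, S x -> S y -> S (x + y); sgN : forall x, S x -> S (- x) }.

Record qhyp (V : zmodType) (S Z : V -> Prop) : Prop := QHyp {
  qhS : subgrp S; qhZ : subgrp Z; qhZS : forall x, Z x -> S x }.

Definition qcl (V : zmodType) (Z : V -> Prop) (v : V) : V -> Prop := fun w => Z (w - v).
Definition qT (V : zmodType) (S Z : V -> Prop) (h : qhyp S Z) :=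
  {X : V -> Prop | exists v, S v /\ X = qcl Z v}.

HB.instance Definition _ V S Z h := gen_eqMixin (@qT V S Z h).
HB.instance Definition _ V S Z h := gen_choiceMixin (@qT V S Z h).

Section Quot.
Variables (V : zmodType) (S Z : V -> Prop) (h : qhyp S Z).
Local Notation Q := (@qT V S Z h).

Lemma S0 : S 0. Proof. case: (qhS h) => *; auto. Qed.
Lemma SD x y : S x -> S y -> S (x + y). Proof. case: (qhS h) => *; auto. Qed.
Lemma SN x : S x -> S (- x). Proof. case: (qhS h) => *; auto. Qed.
Lemma Z0 : Z 0. Proof. case: (qhZ h) => *; auto. Qed.
Lemma ZD x y : Z x -> Z y -> Z (x + y). Proof. case: (qhZ h) => *; auto. Qed.
Lemma ZN x : Z x -> Z (- x). Proof. case: (qhZ h) => *; auto. Qed.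
Lemma ZB x y : Z x -> Z y -> Z (x - y). Proof. by move=> ? ?; apply: ZD => //; apply: ZN. Qed.

Definition qpi0 : Q := exist _ (qcl Z 0) (ex_intro _ 0 (conj S0 erefl)).
Definition qpi (v : V) : Q :=
  match pselect (S v) with
  | left hv => exist _ (qcl Z v) (ex_intro _ v (conj hv erefl))
  | right _ => qpi0 end.
Definition qrep (q : Q) : V := proj1_sig (cid (proj2_sig q)).

Lemma qrepS q : S (qrep q).
Proof. by rewrite /qrep; case: (cid _) => v [] . Qed.

Lemma qrepK q : qpi (qrep q) = q.
Proof.
rewrite /qrep; case: (cid _) => v [hv e] /=; rewrite /qpi.
case: pselect => // hv'; case: q e => X HX /= e; exact: eq_exist.
Qed.

Lemma qpiE v w : S v -> S w -> (qpi v = qpi w) <-> Z (v - w).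
Proof.
move=> hv hw; rewrite /qpi; case: pselect => // hv'; case: pselect => // hw'.
split.
- move=> /(congr1 (@proj1_sig _ _)) /= e.
  have : qcl Z v v by rewrite /qcl subrr; exact: Z0.
  by rewrite e.
- move=> hz; apply: eq_exist; apply: funext => u; apply: propext; rewrite /qcl.
  split => hu.
  + by have := ZD hu hz; rewrite addrA subrK.
  + by have := ZB hu hz; rewrite opprB addrA subrK.
Qed.

Lemma qpiP q : exists2 v, S v & q = qpi v.
Proof. by exists (qrep q); [exact: qrepS | rewrite qrepK]. Qed.

Lemma qrep_pi v : S v -> Z (qrep (qpi v) - v).
Proof. by move=> hv; apply/(qpiE (qrepS _) hv); rewrite qrepK. Qed.

Definition qzero : Q := qpi 0.
Definition qadd (p q : Q) : Q := qpi (qrep p + qrep q).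
Definition qopp (p : Q) : Q := qpi (- qrep p).

Lemma qadd_pi v w : S v -> S w -> qadd (qpi v) (qpi w) = qpi (v + w).
Proof.
move=> hv hw; apply/qpiE; [by apply: SD; exact: qrepS | exact: SD |].
by rewrite opprD addrACA; exact: ZD (qrep_pi hv) (qrep_pi hw).
Qed.

Lemma qopp_pi v : S v -> qopp (qpi v) = qpi (- v).
Proof.
move=> hv; apply/qpiE; [by apply: SN; exact: qrepS | exact: SN |].
by have := ZN (qrep_pi hv); congr Z; rewrite opprB opprK addrC.
Qed.

Lemma qaddA : associative qadd.
Proof.
move=> p q r; case: (qpiP p) => a ha ->; case: (qpiP q) => b hb ->; case: (qpiP r) => c hc ->.
by rewrite (qadd_pi ha hb) (qadd_pi (SD ha hb) hc) (qadd_pi hb hc) (qadd_pi ha (SD hb hc)) addrA.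
Qed.
Lemma qaddC : commutative qadd.
Proof. by move=> p q; case: (qpiP p) => a ha ->; case: (qpiP q) => b hb ->; rewrite !qadd_pi // addrC. Qed.
Lemma qadd0 : left_id qzero qadd.
Proof. by move=> p; case: (qpiP p) => a ha ->; rewrite /qzero qadd_pi ?add0r //; exact: S0. Qed.
Lemma qaddN : left_inverse qzero qopp qadd.
Proof. by move=> p; case: (qpiP p) => a ha ->; rewrite qopp_pi // qadd_pi ?addNr //; exact: SN. Qed.

HB.instance Definition _ := GRing.isZmodule.Build Q qaddA qaddC qadd0 qaddN.

Lemma qpi_add v w : S v -> S w -> qpi (v + w) = qpi v + qpi w.
Proof. by move=> hv hw; rewrite -qadd_pi. Qed.
Lemma qpi_opp v : S v -> qpi (- v) = - qpi v.
Proof. by move=> hv; rewrite -qopp_pi. Qed.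
Lemma qpi0E : qpi 0 = 0. Proof. by []. Qed.
Lemma qpi_eq0 v : S v -> (qpi v = 0) <-> Z v.
Proof. by move=> hv; rewrite -qpi0E qpiE ?subr0 //; exact: S0. Qed.
End Quot.

Record ihyp (V : comPzRingType) (Z : V -> Prop) : Prop := IHyp {
  ihZ : subgrp Z; ihM : forall r x, Z x -> Z (r * x) }.

Lemma ih_q (V : comPzRingType) (Z : V -> Prop) (h : ihyp Z) : qhyp (fun _ : V => True) Z.
Proof. case: h => hZ _; split => //; by split. Qed.

Definition rqT (V : comPzRingType) (Z : V -> Prop) (h : ihyp Z) := qT (ih_q h).
HB.instance Definition _ V Z h := GRing.Zmodule.on (@rqT V Z h).

Section RQuot.
Variables (V : comPzRingType) (Z : V -> Prop) (h : ihyp Z).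
Local Notation Q := (@rqT V Z h).
Definition rpi (v : V) : Q := qpi (ih_q h) v.
Definition rrep (q : Q) : V := @qrep _ _ _ (ih_q h) q.
Lemma rZM r x : Z x -> Z (r * x). Proof. exact: ihM. Qed.
Lemma rrepK q : rpi (rrep q) = q. Proof. exact: (@qrepK _ _ _ (ih_q h)). Qed.
Lemma rpiE v w : (rpi v = rpi w) <-> Z (v - w). Proof. exact: (@qpiE _ _ _ (ih_q h) v w I I). Qed.
Lemma rpiP (q : Q) : exists v, q = rpi v.
Proof. by case: (@qpiP _ _ _ (ih_q h) q) => v _ ->; exists v. Qed.
Lemma rrep_pi v : Z (rrep (rpi v) - v). Proof. exact: (@qrep_pi _ _ _ (ih_q h) v I). Qed.
Lemma rpi_add v w : rpi (v + w) = rpi v + rpi w. Proof. exact: (@qpi_add _ _ _ (ih_q h) v w I I). Qed.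
Lemma rpi_opp v : rpi (- v) = - rpi v. Proof. exact: (@qpi_opp _ _ _ (ih_q h) v I). Qed.
Lemma rpi_sub v w : rpi (v - w) = rpi v - rpi w. Proof. by rewrite rpi_add rpi_opp. Qed.
Lemma rpi_eq0 v : (rpi v = 0) <-> Z v. Proof. exact: (@qpi_eq0 _ _ _ (ih_q h) v I). Qed.

Definition rmul (p q : Q) : Q := rpi (rrep p * rrep q).
Definition rone : Q := rpi 1.
Lemma rmul_pi v w : rmul (rpi v) (rpi w) = rpi (v * w).
Proof.
apply/rpiE.
have -> : rrep (rpi v) * rrep (rpi w) - v * w =
  rrep (rpi v) * (rrep (rpi w) - w) + w * (rrep (rpi v) - v) by ring.
by apply: (sgD (ihZ h)); apply: rZM; apply: rrep_pi.
Qed.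
Lemma rmulA : associative rmul.
Proof. by move=> p q r; case: (rpiP p) => a ->; case: (rpiP q) => b ->; case: (rpiP r) => c ->; rewrite !rmul_pi mulrA. Qed.
Lemma rmulC : commutative rmul.
Proof. by move=> p q; case: (rpiP p) => a ->; case: (rpiP q) => b ->; rewrite !rmul_pi mulrC. Qed.
Lemma rmul1 : left_id rone rmul.
Proof. by move=> p; case: (rpiP p) => a ->; rewrite rmul_pi mul1r. Qed.
Lemma rmulDl : left_distributive rmul +%R.
Proof. by move=> p q r; case: (rpiP p) => a ->; case: (rpiP q) => b ->; case: (rpiP r) => c ->; rewrite -rpi_add !rmul_pi -rpi_add mulrDl. Qed.

HB.instance Definition _ := GRing.Zmodule_isComPzRing.Build Q rmulA rmulC rmul1 rmulDl.

Lemma rpi_mul v w : rpi (v * w) = rpi v * rpi w. Proof. by rewrite -rmul_pi. Qed.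
Lemma rpi_one : rpi 1 = 1. Proof. by []. Qed.
Lemma rpi_zmod : GRing.zmod_morphism rpi. Proof. by move=> x y; rewrite rpi_sub. Qed.
Lemma rpi_monoid : GRing.monoid_morphism rpi. Proof. by split => // x y; rewrite rpi_mul. Qed.
HB.instance Definition _ := GRing.isZmodMorphism.Build V Q rpi rpi_zmod.
HB.instance Definition _ := GRing.isMonoidMorphism.Build V Q rpi rpi_monoid.
End RQuot.

Record mhyp (A : comPzRingType) (S Z : A -> Prop) : Prop := MHyp {
  mhq : qhyp S Z; mhS : forall r x, S x -> S (r * x); mhZ : forall r x, Z x -> Z (r * x) }.

Definition mqT (A : comPzRingType) (S Z : A -> Prop) (h : mhyp S Z) := qT (mhq h).
HB.instance Definition _ A S Z h := GRing.Zmodule.on (@mqT A S Z h).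

Section MQuot.
Variables (A : comPzRingType) (S Z : A -> Prop) (h : mhyp S Z).
Local Notation Q := (@mqT A S Z h).
Definition mpi (v : A) : Q := qpi (mhq h) v.
Definition mrep (q : Q) : A := @qrep _ _ _ (mhq h) q.
Lemma mrepS q : S (mrep q). Proof. exact: (@qrepS _ _ _ (mhq h)). Qed.
Lemma mrepK q : mpi (mrep q) = q. Proof. exact: (@qrepK _ _ _ (mhq h)). Qed.
Lemma mpiE v w : S v -> S w -> (mpi v = mpi w) <-> Z (v - w). Proof. exact: (@qpiE _ _ _ (mhq h)). Qed.
Lemma mpiP (q : Q) : exists2 v, S v & q = mpi v. Proof. exact: (@qpiP _ _ _ (mhq h)). Qed.
Lemma mrep_pi v : S v -> Z (mrep (mpi v) - v). Proof. exact: (@qrep_pi _ _ _ (mhq h)). Qed.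
Lemma mpi_add v w : S v -> S w -> mpi (v + w) = mpi v + mpi w. Proof. exact: (@qpi_add _ _ _ (mhq h)). Qed.
Lemma mpi_eq0 v : S v -> (mpi v = 0) <-> Z v. Proof. exact: (@qpi_eq0 _ _ _ (mhq h)). Qed.

Definition mscale (a : A) (q : Q) : Q := mpi (a * mrep q).
Lemma mscale_pi a v : S v -> mscale a (mpi v) = mpi (a * v).
Proof.
move=> hv; apply/mpiE; [by apply: (mhS h); apply: mrepS | exact: (mhS h) |].
by rewrite -mulrBr; apply: (mhZ h); apply: mrep_pi.
Qed.
Lemma mscaleA a b v : mscale a (mscale b v) = mscale (a * b) v.
Proof. by case: (mpiP v) => x hx ->; rewrite !mscale_pi ?mulrA //; exact: (mhS h). Qed.
Lemma mscale1 : left_id 1 mscale.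
Proof. by move=> v; case: (mpiP v) => x hx ->; rewrite !mscale_pi ?mul1r. Qed.
Lemma mscaleDr : right_distributive mscale +%R.
Proof.
move=> a p q; case: (mpiP p) => x hx ->; case: (mpiP q) => y hy ->.
rewrite -mpi_add // !mscale_pi ?mulrDr ?mpi_add //; by [apply: (mhS h) | apply: (sgD (qhS (mhq h)))].
Qed.
Lemma mscaleDl v : {morph mscale^~ v : a b / a + b}.
Proof.
move=> a b; case: (mpiP v) => x hx ->.
rewrite !mscale_pi // mulrDl mpi_add //; exact: (mhS h).
Qed.
HB.instance Definition _ := GRing.Zmodule_isLmodule.Build A Q mscaleA mscale1 mscaleDr mscaleDl.
Lemma mpi_scale a v : S v -> mpi (a * v) = a *: mpi v.
Proof. by move=> hv; rewrite -mscale_pi. Qed.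
End MQuot.

Definition dual (A : comPzRingType) (al : A) := (A * A)%type.
HB.instance Definition _ A al := GRing.Zmodule.on (@dual A al).

Section Dual.
Variables (A : comPzRingType) (al : A).
Local Notation B := (@dual A al).
Definition dmul (x y : B) : B := (x.1 * y.1, x.1 * y.2 + x.2 * y.1 + al * x.2 * y.2).
Definition done : B := (1, 0).
Lemma daddE' (x y : B) : x + y = (x.1 + y.1, x.2 + y.2). Proof. by []. Qed.
Lemma dmulA : associative dmul.
Proof. by move=> [a b] [c d] [e g]; rewrite /dmul /=; congr pair; ring. Qed.
Lemma dmulC : commutative dmul.
Proof. by move=> [a b] [c d]; rewrite /dmul /=; congr pair; ring. Qed.
Lemma dmul1 : left_id done dmul.
Proof. by move=> [a b]; rewrite /dmul /=; congr pair; ring. Qed.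
Lemma dmulDl : left_distributive dmul +%R.
Proof. by move=> [a b] [c d] [e g]; rewrite /dmul !daddE' /=; congr pair; ring. Qed.
HB.instance Definition _ := GRing.Zmodule_isComPzRing.Build B dmulA dmulC dmul1 dmulDl.
Lemma dmulE (x y : B) : x * y = (x.1 * y.1, x.1 * y.2 + x.2 * y.1 + al * x.2 * y.2).
Proof. by []. Qed.
Lemma doneE : (1 : B) = (1, 0). Proof. by []. Qed.
Lemma daddE (x y : B) : x + y = (x.1 + y.1, x.2 + y.2). Proof. by []. Qed.
Lemma doppE (x : B) : - x = (- x.1, - x.2). Proof. by []. Qed.
Lemma d0E : (0 : B) = (0, 0). Proof. by []. Qed.
Lemma dfstD (u v : B) : (u + v).1 = u.1 + v.1. Proof. by []. Qed.
Lemma dsndD (u v : B) : (u + v).2 = u.2 + v.2. Proof. by []. Qed.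
Lemma dfstN (u : B) : (- u).1 = - u.1. Proof. by []. Qed.
Lemma dsndN (u : B) : (- u).2 = - u.2. Proof. by []. Qed.
Lemma dfstB (u v : B) : (u - v).1 = u.1 - v.1. Proof. by []. Qed.
Lemma dsndB (u v : B) : (u - v).2 = u.2 - v.2. Proof. by []. Qed.
Lemma dfstM (u v : B) : (u * v).1 = u.1 * v.1. Proof. by []. Qed.
Lemma dsndM (u v : B) : (u * v).2 = u.1 * v.2 + u.2 * v.1 + al * u.2 * v.2. Proof. by []. Qed.
Lemma dfst0 : (0 : B).1 = 0. Proof. by []. Qed.
Lemma dsnd0 : (0 : B).2 = 0. Proof. by []. Qed.
End Dual.

Section Iota.
Variables (R : comNzRingType) (A : comPzRingType) (f : {rmorphism R -> A}) (al : A).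
Definition diota (r : R) : @dual A al := (f r, 0).
Lemma diota_zmod : GRing.zmod_morphism diota.
Proof. by move=> x y; rewrite /diota rmorphB; congr pair; rewrite subr0. Qed.
Lemma diota_monoid : GRing.monoid_morphism diota.
Proof. split; first by rewrite /diota rmorph1.
by move=> x y; rewrite /diota dmulE /= rmorphM; congr pair; ring. Qed.
HB.instance Definition _ := GRing.isZmodMorphism.Build R (@dual A al) diota diota_zmod.
HB.instance Definition _ := GRing.isMonoidMorphism.Build R (@dual A al) diota diota_monoid.
End Iota.

Section EP.
Variables (R : comNzRingType) (A : comPzRingType) (f : {rmorphism R -> A}) (I : R -> Prop).
Local Notation P := (ext_pow f I).

Lemma EP0 n : P n 0.
Proof. by exists 0%N, (fun _ => 0), (fun _ _ => 0); split; [by case | by rewrite big_ord0]. Qed.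

Lemma EPD n x y : P n x -> P n y -> P n (x + y).
Proof.
move=> [m1 [a1 [g1 [h1 ->]]]] [m2 [a2 [g2 [h2 ->]]]].
exists (m1 + m2)%N, (fun k => match split k with inl i => a1 i | inr i => a2 i end),
  (fun k => match split k with inl i => g1 i | inr i => g2 i end).
split.
  by move=> k j; case: (split k).
rewrite big_split_ord /=; congr (_ + _); apply: eq_bigr => i _.
  by rewrite (unsplitK (inl i)).
by rewrite (unsplitK (inr i)).
Qed.

Lemma EPM n c x : P n x -> P n (c * x).
Proof.
move=> [m [a [g [h ->]]]]; exists m, (fun k => c * a k), g; split => //.
by rewrite mulr_sumr; apply: eq_bigr => i _; ring.
Qed.

Lemma EPN n x : P n x -> P n (- x).
Proof. by move=> hx; rewrite -mulN1r; apply: EPM. Qed.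
Lemma EPB n x y : P n x -> P n y -> P n (x - y).
Proof. by move=> hx hy; apply: EPD => //; apply: EPN. Qed.

Lemma EPsum n m (F : 'I_m -> A) : (forall i, P n (F i)) -> P n (\sum_(i < m) F i).
Proof.
move=> hF; elim/big_ind: _ => //; [exact: EP0 | exact: EPD].
Qed.

Lemma EPall x : P 0 x.
Proof.
exists 1%N, (fun _ => x), (fun _ _ => 0); split; first by move=> k [].
by rewrite big_ord1 big_ord0 rmorph1 mul1r.
Qed.

Lemma EPS n x : P n.+1 x -> P n x.
Proof.
move=> [m [a [g [h ->]]]].
exists m, (fun k => f (g k ord_max) * a k), (fun k j => g k (widen_ord (leqnSn n) j)).
split => //; apply: eq_bigr => k _.
rewrite big_ord_recr /= rmorphM mulrA; congr (f _ * _ * _).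
Qed.

Lemma EPle n n' x : (n <= n')%N -> P n' x -> P n x.
Proof.
move=> /subnK <-; elim: (n' - n)%N => [//|k IH] hx.
by apply: IH; apply: EPS; exact: hx.
Qed.

Lemma EPI n r p : I r -> P n p -> P n.+1 (f r * p).
Proof.
move=> hr [m [a [g [h ->]]]].
exists m, a, (fun k j => if unlift ord_max j is Some j' then g k j' else r).
split.
  by move=> k j; case: (unlift ord_max j) => [j'|] //; apply: h.
rewrite mulr_sumr; apply: eq_bigr => k _.
rewrite big_ord_recr /= unlift_none rmorphM mulrA [f r * _]mulrC.
congr (f _ * _ * _); apply: eq_bigr => j _.
have -> : widen_ord (leqnSn n) j = lift ord_max j by apply: val_inj; rewrite /= /bump leqNgt ltn_ord add0n.
by rewrite liftK.
Qed.

Lemma EP1M n u p : P 1 u -> P n p -> P n.+1 (u * p).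
Proof.
move=> [m [a [g [h ->]]]] hp.
rewrite mulr_suml; apply: EPsum => k.
rewrite big_ord1 (_ : _ * a k * p = a k * (f (g k ord0) * p)); last by ring.
by apply: EPM; apply: EPI.
Qed.

Lemma EPideal n r : ideal_pow I n r -> P n (f r).
Proof.
move=> [m [c [g [h ->]]]]; rewrite rmorph_sum; apply: EPsum => k.
rewrite rmorphM mulrC; exists 1%N, (fun _ => f (c k)), (fun _ => g k); split => //.
by rewrite big_ord1.
Qed.
End EP.

Section Main.
Variables (R : comNzRingType) (A : comPzRingType) (f : {rmorphism R -> A}) (I : R -> Prop).
Variables (alpha : A) (d : nat) (T : 'I_d -> A) (a : 'I_d -> A).
Local Notation P := (ext_pow f I).

Definition valid (dd : A -> A) (G : A -> Prop) :=
  [/\ forall x y, G (dd (x + y) - (dd x + dd y)),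
      forall x y, G (dd (x * y) - (dd x * y + x * dd y + alpha * dd x * dd y)),
      forall r, G (dd (f r))
    & forall i, G (dd (T i) - a i)].

Lemma valid_mono dd (G G' : A -> Prop) : (forall x, G x -> G' x) -> valid dd G -> valid dd G'.
Proof. by move=> hG [h1 h2 h3 h4]; split => *; apply: hG. Qed.

Section Ideal.
Variables (G : A -> Prop) (hG : ihyp G).
Lemma G0 : G 0. Proof. case: (ihZ hG) => *; auto. Qed.
Lemma GD x y : G x -> G y -> G (x + y). Proof. case: (ihZ hG) => *; auto. Qed.
Lemma GN x : G x -> G (- x). Proof. case: (ihZ hG) => *; auto. Qed.
Lemma GB x y : G x -> G y -> G (x - y). Proof. by move=> ? ?; apply: GD => //; apply: GN. Qed.
Lemma GM r x : G x -> G (r * x). Proof. exact: (ihM hG). Qed.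
Lemma GMr r x : G x -> G (x * r). Proof. by rewrite mulrC; apply: GM. Qed.

Variables (dd : A -> A) (hv : valid dd G).
Lemma d_fmul r y : G (dd (f r * y) - f r * dd y).
Proof.
case: hv => _ h2 h3 _.
have := h2 (f r) y.
set u := dd (f r); move=> H.
have -> : dd (f r * y) - f r * dd y =
   (dd (f r * y) - (u * y + f r * dd y + alpha * u * dd y)) + (u * y + alpha * u * dd y) by ring.
apply: GD; first exact: H.
apply: GD; first by apply: GMr; apply: h3.
by rewrite -mulrA; apply: GM; apply: GMr; apply: h3.
Qed.

Lemma d_sum m (r : 'I_m -> R) (b : 'I_m -> A) :
  G (dd (\sum_(k < m) f (r k) * b k) - \sum_(k < m) f (r k) * dd (b k)).
Proof.
case: hv => h1 _ _ _.
elim: m r b => [|m IH] r b.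
  rewrite !big_ord0.
  have H := h1 0 0; rewrite addr0 in H.
  have -> : dd 0 - 0 = - (dd 0 - (dd 0 + dd 0)) by ring.
  exact: GN.
rewrite !big_ord_recr /=.
set S := \sum_(i < m) _; set S' := \sum_(i < m) _.
have -> : dd (S + f (r ord_max) * b ord_max) - (S' + f (r ord_max) * dd (b ord_max)) =
   (dd (S + f (r ord_max) * b ord_max) - (dd S + dd (f (r ord_max) * b ord_max)))
   + (dd S - S') + (dd (f (r ord_max) * b ord_max) - f (r ord_max) * dd (b ord_max)) by ring.
apply: GD; [apply: GD => //|exact: d_fmul].
exact: (IH (fun k => r (widen_ord (leqnSn m) k)) (fun k => b (widen_ord (leqnSn m) k))).
Qed.
End Ideal.

Lemma P_ideal n : ihyp (P n).
Proof.
split; first split; [exact: EP0 | exact: EPD | exact: EPN |].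
by move=> r x; apply: EPM.
Qed.

Definition Gk n k (x : A) := exists p q, P n p /\ P n.+1 q /\ x = alpha ^+ k * p + q.

Lemma Gk_ideal n k : ihyp (Gk n k).
Proof.
split; first split.
- by exists 0, 0; rewrite mulr0 addr0; split; [exact: EP0|split; [exact: EP0|]].
- move=> x y [p [q [hp [hq ->]]]] [p' [q' [hp' [hq' ->]]]].
  exists (p + p'), (q + q'); split; first exact: EPD.
  by split; [exact: EPD | ring].
- move=> x [p [q [hp [hq ->]]]].
  exists (- p), (- q); split; first exact: EPN.
  by split; [exact: EPN | ring].
- move=> r x [p [q [hp [hq ->]]]].
  exists (r * p), (r * q); split; first exact: EPM.
  by split; [exact: EPM | ring].
Qed.

Lemma P1_Gk n k x : P n.+1 x -> Gk n k x.
Proof. by move=> hx; exists 0, x; rewrite mulr0 add0r; split; [exact: EP0|]. Qed.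

Lemma Pn_G0 n x : P n x -> Gk n 0 x.
Proof. by move=> hx; exists x, 0; rewrite expr0 mul1r addr0; split => //; split => //; exact: EP0. Qed.

Lemma Gk_alpha n k x : Gk n k x -> Gk n k.+1 (alpha * x).
Proof.
move=> [p [q [hp [hq ->]]]]; exists p, (alpha * q); split => //; split; first exact: EPM.
by rewrite exprS; ring.
Qed.

Lemma Gk_P1 n k u x : P 1 u -> Gk n k x -> Gk n k.+1 (u * x).
Proof.
move=> hu [p [q [hp [hq ->]]]]; apply: P1_Gk.
rewrite mulrDr; apply: EPD; last exact: EPM.
by rewrite mulrCA; apply: EPM; apply: EP1M.
Qed.

Lemma Gk_I n k r x : I r -> Gk n k x -> Gk n k.+1 (f r * x).
Proof.
move=> hr; apply: Gk_P1; rewrite -[f r]mulr1; apply: EPI => //; exact: EPall.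
Qed.

Lemma Gk_S n k x : Gk n k.+1 x -> Gk n k x.
Proof.
move=> [p [q [hp [hq ->]]]]; exists (alpha * p), q; split; first exact: EPM.
by split => //; rewrite exprS; ring.
Qed.

Lemma Gk_top n m x : P 1 (alpha ^+ m) -> Gk n m x -> P n.+1 x.
Proof.
move=> hm [p [q [hp [hq ->]]]]; apply: EPD => //; exact: EP1M.
Qed.


Lemma G_sum (G : A -> Prop) (hG : ihyp G) m (F : 'I_m -> A) :
  (forall i, G (F i)) -> G (\sum_(i < m) F i).
Proof. by move=> hF; elim/big_ind: _ => //; [exact: G0 | exact: GD]. Qed.

Lemma Gk_mhyp n k : mhyp (Gk n k) (Gk n k.+1).
Proof.
have h0 := Gk_ideal n k; have h1 := Gk_ideal n k.+1.
split; [split; [exact: ihZ h0 | exact: ihZ h1 | exact: Gk_S] | exact: (ihM h0) | exact: (ihM h1)].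
Qed.

Lemma uniq_step n k (hT : kahler_basis f I T) dd dd' :
  valid dd (P n.+1) -> valid dd' (P n.+1) ->
  (forall x, Gk n k (dd' x - dd x)) -> forall x, Gk n k.+1 (dd' x - dd x).
Proof.
move=> hv hv' hG.
have hPi := P_ideal n.+1.
have h0 := Gk_ideal n k; have h1 := Gk_ideal n k.+1.
pose hM := Gk_mhyp n k.
pose M := mqT hM.
have hkill : forall x (v : M), ext_pow f I 1 x -> x *: v = 0.
  move=> x v hx; case: (mpiP v) => w hw ->; rewrite -mpi_scale //.
  by apply/mpi_eq0; [exact: GM | exact: Gk_P1].
pose D x : M := mpi hM (dd' x - dd x).
case: (hv) => a1 a2 a3 a4; case: (hv') => b1 b2 b3 b4.
have hD : is_der f I D.
  split.
  - move=> x y; rewrite /D -mpi_add //; apply/mpiE; [exact: hG | by apply: (GD h0) |].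
    apply: P1_Gk.
    have -> : dd' (x + y) - dd (x + y) - (dd' x - dd x + (dd' y - dd y)) =
       (dd' (x + y) - (dd' x + dd' y)) - (dd (x + y) - (dd x + dd y)) by ring.
    exact: EPB.
  - move=> r x; rewrite /D -mpi_scale //; apply/mpiE; [exact: hG | by apply: (GM h0) |].
    apply: P1_Gk.
    have -> : dd' (f r * x) - dd (f r * x) - f r * (dd' x - dd x) =
       (dd' (f r * x) - f r * dd' x) - (dd (f r * x) - f r * dd x) by ring.
    by apply: EPB; apply: d_fmul.
  - move=> x y; rewrite /D -!mpi_scale // -mpi_add; try (by apply: (GM h0)).
    apply/mpiE; [exact: hG | by apply: (GD h0); apply: (GM h0) |].
    have -> : dd' (x * y) - dd (x * y) - (x * (dd' y - dd y) + y * (dd' x - dd x)) =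
       (dd' (x * y) - (dd' x * y + x * dd' y + alpha * dd' x * dd' y))
       - (dd (x * y) - (dd x * y + x * dd y + alpha * dd x * dd y))
       + (alpha * ((dd' x - dd x) * dd' y) + alpha * (dd x * (dd' y - dd y))) by ring.
    apply: (GD h1); first by apply: P1_Gk; apply: EPB.
    by apply: (GD h1); apply: Gk_alpha; [apply: (GMr h0) | apply: (GM h0)].
  - move=> x [m [b [g [hg ->]]]]; rewrite /D; apply/mpi_eq0 => //.
    have e1 := d_sum hPi hv (fun k => \prod_(j < 1) g k j) b.
    have e2 := d_sum hPi hv' (fun k => \prod_(j < 1) g k j) b.
    set X := \sum_(k < m) _ in e1 e2 *.
    set S1 := \sum_(k < m) _ in e1; set S2 := \sum_(k < m) _ in e2.
    have -> : dd' X - dd X = (dd' X - S2) - (dd X - S1) + (S2 - S1) by ring.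
    apply: (GD h1); first by apply: P1_Gk; apply: EPB.
    rewrite /S1 /S2 -sumrB; apply: (G_sum h1) => i.
    rewrite -mulrBr big_ord1; apply: Gk_I => //.
have hD0 : is_der f I (fun _ : A => (0 : M)).
  by split => [x y|r x|x y|x _]; rewrite ?addr0 ?scaler0 ?addr0.
case: (hT M hkill (fun _ => 0)) => D0 [_ _ hu].
have hDT : forall i, D (T i) = 0.
  move=> i; rewrite /D; apply/mpi_eq0 => //; apply: P1_Gk.
  have -> : dd' (T i) - dd (T i) = (dd' (T i) - a i) - (dd (T i) - a i) by ring.
  exact: EPB.
have eD := hu D hD hDT; have e0 := hu _ hD0 (fun _ => erefl).
move=> x; have : D x = 0 by rewrite eD -(e0 x).
by move/mpi_eq0 => H; apply: H.
Qed.

End Main.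

Section Main2.
Variables (R : comNzRingType) (A : comPzRingType) (f : {rmorphism R -> A}) (I : R -> Prop).
Variables (alpha : A) (d : nat) (T : 'I_d -> A) (a : 'I_d -> A).
Local Notation P := (ext_pow f I).
Local Notation valid := (valid f alpha T a).
Local Notation Gk := (Gk f I alpha).

Lemma d_kill (G : A -> Prop) (hG : ihyp G) dd N x :
  valid dd G -> (forall y, P N y -> G y) -> P N x -> G (dd x).
Proof.
move=> hv hPG [m [b [g [hg ->]]]].
have e := d_sum hG hv (fun k => \prod_(j < N) g k j) b.
set X := \sum_(k < m) _ in e *; set S := \sum_(k < m) _ in e.
have -> : dd X = (dd X - S) + S by ring.
apply: (GD hG) => //; apply: hPG; apply: EPsum => k.
by exists 1%N, (fun _ => dd (b k)), (fun _ => g k); split => //; rewrite big_ord1.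
Qed.

Lemma step_smooth n k dd :
  formally_smooth_quot f (ideal_pow I n.+1) (P n.+1) ->
  valid dd (Gk n k) ->
  exists dd', [/\ forall x y, Gk n k.+1 (dd' (x + y) - (dd' x + dd' y)),
      forall x y, Gk n k.+1 (dd' (x * y) - (dd' x * y + x * dd' y + alpha * dd' x * dd' y)),
      forall r, Gk n k.+1 (dd' (f r))
    & forall i, Gk n k (dd' (T i) - a i)].
Proof.
move=> hfs hv.
have h0 := Gk_ideal f I alpha n k; have h1 := Gk_ideal f I alpha n k.+1.
have hPi := P_ideal f I n.+1.
pose Zd (u : dual alpha) := P n.+1 u.1 /\ Gk n k.+1 u.2.
have hZ : ihyp Zd.
  split; first split.
  - by rewrite /Zd; split; [exact: EP0 | exact: (G0 h1)].
  - by rewrite /Zd; move=> u v [? ?] [? ?]; split; [exact: EPD | exact: (GD h1)].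
  - by rewrite /Zd; move=> u [? ?]; split; [exact: EPN | exact: (GN h1)].
  - rewrite /Zd; move=> u v [hv1 hv2]; rewrite dmulE /=; split; first exact: EPM.
    apply: (GD h1); first apply: (GD h1).
    + exact: (GM h1).
    + by apply: (GM h1); apply: P1_Gk.
    + by rewrite -mulrA; do 2 apply: (GM h1).
pose C := rqT hZ.
pose fC : {rmorphism R -> C} := (rpi hZ \o diota f alpha).
pose N (c : C) := exists e, Gk n k e /\ c = (rpi hZ) (0, e).
have piN : forall (u : dual alpha) e, u.1 = 0 -> u.2 = e -> Gk n k e -> N ((rpi hZ) u).
  move=> [u1 u2] e /= -> -> he; by exists e.
have pi_eq2 : forall u v : dual alpha, (rpi hZ) u = (rpi hZ) v -> Gk n k.+1 (u.2 - v.2).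
  by move=> u v /rpiE [].
have hK : forall r, ideal_pow I n.+1 r -> fC r = 0.
  move=> r hr; apply/rpi_eq0; split; [exact: EPideal | exact: (G0 h1)].
have hN : is_ideal N.
  split; [|split].
  - exists 0; split; first exact: (G0 h0).
    by symmetry; apply/rpi_eq0; split; [exact: EP0 | exact: (G0 h1)].
  - move=> x y [e [he ->]] [e' [he' ->]]; rewrite -rpi_add.
    apply: (piN _ (e + e')); rewrite ?dfstD ?dsndD /= ?addr0 //; exact: (GD h0).
  - move=> r x [e [he ->]]; case: (rpiP r) => v ->; rewrite -rpi_mul.
    apply: (piN _ (v.1 * e + alpha * v.2 * e)); rewrite ?dfstM ?dsndM /=; try ring.
    by apply: (GD h0); [apply: (GM h0) | apply: (GM h0)].
have hsq : forall x y, N x -> N y -> x * y = 0.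
  move=> x y [e [he ->]] [e' [he' ->]]; rewrite -rpi_mul; apply/rpi_eq0.
  rewrite /Zd dfstM dsndM /= !(mul0r, mulr0, add0r, addr0); split; first exact: EP0.
  by rewrite -mulrA; apply: Gk_alpha; apply: (GMr h0).
pose g x := (rpi hZ) (x, dd x).
have hJ : forall x, P n.+1 x -> N (g x).
  move=> x hx; exists (dd x); split; first by apply: (d_kill h0 hv) hx; apply: P1_Gk.
  apply/rpiE; rewrite /Zd dfstB dsndB /= subr0 subrr; split => //; exact: (G0 h1).
case: (hv) => v1 v2 v3 v4.
have hadd : forall x y, N (g (x + y) - (g x + g y)).
  move=> x y; rewrite /g /=. rewrite -rpi_add -rpi_sub.
  apply: (piN _ (dd (x + y) - (dd x + dd y))) => //.
  by rewrite dfstB dfstD /= subrr.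
have hmul : forall x y, N (g (x * y) - g x * g y).
  move=> x y; rewrite /g /= -rpi_mul -rpi_sub.
  apply: (piN _ (dd (x * y) - (dd x * y + x * dd y + alpha * dd x * dd y))) => //.
    by rewrite dfstB dfstM /= subrr.
  by rewrite dsndB dsndM /=; ring.
have hR : forall r, N (g (f r) - fC r).
  move=> r; rewrite /g /fC /= -rpi_sub.
  apply: (piN _ (dd (f r))) => //; by rewrite ?dfstB ?dsndB /= ?subrr ?subr0.
case: (hfs C fC N hK hN hsq g hJ hadd hmul hR) => h [hadd' hmul' hR' _ hNh].
have ex : forall x, {e | Gk n k e /\ h x - g x = (rpi hZ) (0, e)} := fun x => cid (hNh x).
pose dd' x := dd x + sval (ex x).
have hx : forall x, h x = (rpi hZ) (x, dd' x).
  move=> x; rewrite /dd'; case: (ex x) => /= e [he hxe].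
  have -> : h x = h x - g x + g x by rewrite subrK.
  by rewrite hxe /g /= -rpi_add daddE /= add0r addrC.
have hT' : forall i, Gk n k (dd' (T i) - a i).
  move=> i; rewrite /dd'; case: (ex (T i)) => /= e [he _].
  have -> : dd (T i) + e - a i = (dd (T i) - a i) + e by ring.
  exact: (GD h0).
clearbody dd'.
exists dd'; split => //.
- move=> x y; have := hadd' x y; rewrite !hx -rpi_add => /pi_eq2.
  by rewrite dsndD.
- move=> x y; have := hmul' x y; rewrite !hx -rpi_mul => /pi_eq2.
  by rewrite dsndM /= (addrC (x * dd' y)).
- move=> r; have := hR' r; rewrite hx /fC /= => /pi_eq2 /=.
  by rewrite subr0.
Qed.

Lemma step_kahler n k (hT : kahler_basis f I T) dd' :
  (forall x y, Gk n k.+1 (dd' (x + y) - (dd' x + dd' y))) ->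
  (forall x y, Gk n k.+1 (dd' (x * y) - (dd' x * y + x * dd' y + alpha * dd' x * dd' y))) ->
  (forall r, Gk n k.+1 (dd' (f r))) ->
  (forall i, Gk n k (dd' (T i) - a i)) ->
  exists dd'', valid dd'' (Gk n k.+1).
Proof.
move=> b1 b2 b3 b4.
have h0 := Gk_ideal f I alpha n k; have h1 := Gk_ideal f I alpha n k.+1.
pose hM := Gk_mhyp f I alpha n k.
pose M := mqT hM.
have hkill : forall x (v : M), ext_pow f I 1 x -> x *: v = 0.
  move=> x v hx; case: (mpiP v) => w hw ->; rewrite -mpi_scale //.
  by apply/mpi_eq0; [exact: (GM h0) | exact: Gk_P1].
pose mm i : M := mpi hM (a i - dd' (T i)).
case: (hT M hkill mm) => D [[Dadd Dscale Dmul _] DT _].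
have mrep_add : forall p q : M, Gk n k.+1 (@mrep _ _ _ hM (p + q) - (@mrep _ _ _ hM p + @mrep _ _ _ hM q)).
  move=> p q; rewrite -{1}(mrepK p) -{1}(mrepK q) -mpi_add; try exact: mrepS.
  by apply: mrep_pi; apply: (GD h0); exact: mrepS.
have mrep_scale : forall c (p : M), Gk n k.+1 (@mrep _ _ _ hM (c *: p) - c * @mrep _ _ _ hM p).
  move=> c p; rewrite -{1}(mrepK p) -mpi_scale; last exact: mrepS.
  by apply: mrep_pi; apply: (GM h0); exact: mrepS.
have mrep0 : Gk n k.+1 (@mrep _ _ _ hM 0).
  by have := @mrep_pi _ _ _ hM 0 (G0 h0); rewrite subr0.
have D1 : D 1 = 0.
  have := Dmul 1 1; rewrite mul1r !scale1r => H.
  by apply: (@addrI _ (D 1)); rewrite addr0 -H.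
have Df : forall r, D (f r) = 0.
  by move=> r; rewrite -[f r]mulr1 Dscale D1 scaler0.
exists (fun x => dd' x + mrep (D x)); split.
- move=> x y /=; rewrite Dadd.
  have -> : dd' (x + y) + mrep (D x + D y) - (dd' x + mrep (D x) + (dd' y + mrep (D y))) =
    (dd' (x + y) - (dd' x + dd' y)) + (mrep (D x + D y) - (mrep (D x) + mrep (D y))) by ring.
  exact: (GD h1).
- move=> x y /=; rewrite Dmul.
  set ux := mrep (D x); set uy := mrep (D y).
  have -> : dd' (x * y) + mrep (x *: D y + y *: D x) -
     ((dd' x + ux) * y + x * (dd' y + uy) + alpha * (dd' x + ux) * (dd' y + uy)) =
     (dd' (x * y) - (dd' x * y + x * dd' y + alpha * dd' x * dd' y))
     + (mrep (x *: D y + y *: D x) - (mrep (x *: D y) + mrep (y *: D x)))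
     + (mrep (x *: D y) - x * uy) + (mrep (y *: D x) - y * ux)
     - alpha * (dd' x * uy + ux * dd' y + ux * uy) by ring.
  apply: (GB h1); last first.
    apply: Gk_alpha; apply: (GD h0); first apply: (GD h0).
    + by apply: (GM h0); exact: mrepS.
    + by apply: (GMr h0); exact: mrepS.
    + by apply: (GM h0); exact: mrepS.
  apply: (GD h1); last exact: mrep_scale.
  apply: (GD h1); last exact: mrep_scale.
  exact: (GD h1).
- by move=> r /=; rewrite Df; apply: (GD h1).
- move=> i /=; rewrite DT /mm.
  have := @mrep_pi _ _ _ hM (a i - dd' (T i)).
  have hS : Gk n k (a i - dd' (T i)).
    by have := GN h0 (b4 i); rewrite opprB.
  move=> /(_ hS) H.
  have -> : dd' (T i) + mrep (mpi hM (a i - dd' (T i))) - a i =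
     mrep (mpi hM (a i - dd' (T i))) - (a i - dd' (T i)) by ring.
  exact: H.
Qed.

End Main2.

Section Main3.
Variables (R : comNzRingType) (A : comPzRingType) (f : {rmorphism R -> A}) (I : R -> Prop).
Variables (alpha : A) (d : nat) (T : 'I_d -> A) (a : 'I_d -> A).
Local Notation P := (ext_pow f I).
Local Notation valid := (valid f alpha T a).
Local Notation Gk := (Gk f I alpha).

Lemma valid_close (G : A -> Prop) (hG : ihyp G) d1 d2 :
  valid d1 G -> (forall x, G (d2 x - d1 x)) -> valid d2 G.
Proof.
move=> [v1 v2 v3 v4] he.
pose e x := d2 x - d1 x.
have de : forall x, d2 x = d1 x + e x by move=> x; rewrite /e addrC subrK.
split.
- move=> x y; rewrite !de.
  have -> : d1 (x + y) + e (x + y) - (d1 x + e x + (d1 y + e y)) =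
    (d1 (x + y) - (d1 x + d1 y)) + e (x + y) - e x - e y by ring.
  apply: (GB hG); last exact: he.
  apply: (GB hG); last exact: he.
  apply: (GD hG); [exact: v1 | exact: he].
- move=> x y; rewrite !de.
  have -> : d1 (x * y) + e (x * y) - ((d1 x + e x) * y + x * (d1 y + e y)
       + alpha * (d1 x + e x) * (d1 y + e y)) =
    (d1 (x * y) - (d1 x * y + x * d1 y + alpha * d1 x * d1 y)) + e (x * y)
    - (e x * y + x * e y + alpha * (e x * d1 y + d1 x * e y + e x * e y)) by ring.
  apply: (GB hG); first by apply: (GD hG); [exact: v2 | exact: he].
  apply: (GD hG); first apply: (GD hG).
  + by apply: (GMr hG); exact: he.
  + by apply: (GM hG); exact: he.
  apply: (GM hG); apply: (GD hG); first apply: (GD hG).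
  + by apply: (GMr hG); exact: he.
  + by apply: (GM hG); exact: he.
  + by apply: (GM hG); exact: he.
- by move=> r; rewrite de; apply: (GD hG); [exact: v3 | exact: he].
- move=> i; rewrite de.
  have -> : d1 (T i) + e (T i) - a i = (d1 (T i) - a i) + e (T i) by ring.
  by apply: (GD hG); [exact: v4 | exact: he].
Qed.

Lemma exist_level n (hT : kahler_basis f I T)
  (hfs : formally_smooth_quot f (ideal_pow I n.+1) (P n.+1)) m (hm : P 1 (alpha ^+ m)) dd :
  valid dd (P n) -> exists dd', valid dd' (P n.+1).
Proof.
move=> hv.
have H : forall k, exists dd', valid dd' (Gk n k).
  elim=> [|k [dd1 hv1]].
    by exists dd; apply: (valid_mono _ hv) => x; apply: Pn_G0.
  case: (step_smooth hfs hv1) => dd2 [c1 c2 c3 c4].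
  exact: (step_kahler hT c1 c2 c3 c4).
case: (H m) => dd' hv'; exists dd'; apply: (valid_mono _ hv') => x.
exact: Gk_top hm.
Qed.

Lemma uniq_level (hT : kahler_basis f I T) m (hm : P 1 (alpha ^+ m)) n dd dd' :
  valid dd (P n) -> valid dd' (P n) -> forall x, P n (dd' x - dd x).
Proof.
elim: n dd dd' => [|n IH] dd dd' hv hv' x; first exact: EPall.
have hPS : forall y, P n.+1 y -> P n y by move=> y; apply: EPS.
have Hn := IH dd dd' (valid_mono hPS hv) (valid_mono hPS hv').
have H : forall k x, Gk n k (dd' x - dd x).
  elim=> [|k IHk] y; first by apply: Pn_G0.
  exact: (uniq_step hT hv hv' IHk).
exact: (Gk_top hm (H m x)).
Qed.
End Main3.

Theorem proposition5p13 (R : comNzRingType) (A : comPzRingType)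
    (f : {rmorphism R -> A}) (I : R -> Prop) (hI : is_ideal I)
    (hsep : adic_separated f I) (hcomp : adic_complete f I)
    (hsm : forall n : nat, (1 <= n)%N -> smooth_quot f (ideal_pow I n) (ext_pow f I n))
    (alpha : A) (halpha : adic_nilpotent f I alpha)
    (d : nat) (T : 'I_d -> A) (hT : kahler_basis f I T) (a : 'I_d -> A) :
  exists dd : A -> A,
    [/\ alpha_derivation f alpha dd,
        forall i, dd (T i) = a i
      & forall dd' : A -> A, alpha_derivation f alpha dd' ->
          (forall i, dd' (T i) = a i) -> forall x, dd' x = dd x].
Proof.
have hfs : forall n, formally_smooth_quot f (ideal_pow I n.+1) (ext_pow f I n.+1).
  by move=> n; case: (hsm n.+1 isT).
case: (halpha 1%N) => m hm.
have ex : forall n, exists dd, valid f alpha T a dd (ext_pow f I n).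
  elim=> [|n [dd hv]].
    exists (fun _ => 0); split => *; exact: EPall.
  exact: (exist_level hT (hfs n) hm hv).
pose dn n := proj1_sig (cid (ex n)).
have hdn : forall n, valid f alpha T a (dn n) (ext_pow f I n) := fun n => proj2_sig (cid (ex n)).
have cauchy : forall x n, ext_pow f I n (dn n.+1 x - dn n x).
  move=> x n; apply: (uniq_level hT hm (hdn n)).
  by apply: (valid_mono _ (hdn n.+1)) => y; apply: EPS.
have lim : forall x, exists y, forall n, ext_pow f I n (y - dn n x).
  by move=> x; apply: (hcomp (fun n => dn n x)); apply: cauchy.
pose dd x := proj1_sig (cid (lim x)).
have hdd : forall x n, ext_pow f I n (dd x - dn n x) := fun x => proj2_sig (cid (lim x)).
have vdd : forall n, valid f alpha T a dd (ext_pow f I n).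
  move=> n; apply: (valid_close (P_ideal f I n) (hdn n)) => x; exact: hdd.
have z : forall y, (forall n, ext_pow f I n y) -> forall u v, y = u - v -> u = v.
  by move=> y hy u v e; apply/eqP; rewrite -subr_eq0 -e; apply/eqP; apply: hsep.
have dfr : forall r, dd (f r) = 0.
  by move=> r; apply: (z (dd (f r))); [move=> n; case: (vdd n) | rewrite subr0].
have dmul : forall x y, dd (x * y) = dd x * y + x * dd y + alpha * dd x * dd y.
  by move=> x y; apply: (z _ _ _ _ erefl) => n; case: (vdd n).
exists dd; split.
- split.
  + by move=> x y; apply: (z _ _ _ _ erefl) => n; case: (vdd n).
  + by move=> r x; rewrite dmul dfr !(mul0r, mulr0, add0r, addr0).
  + by rewrite -(rmorph1 f) dfr.
  + exact: dmul.
- by move=> i; apply: (z _ _ _ _ erefl) => n; case: (vdd n).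
- move=> dd' [a1 a2 a3 a4] hdT x.
  have v' : forall n, valid f alpha T a dd' (ext_pow f I n).
    move=> n; split.
    + by move=> u v; rewrite a1 subrr; exact: EP0.
    + by move=> u v; rewrite a4 subrr; exact: EP0.
    + by move=> r; rewrite -[f r]mulr1 a2 a3 mulr0; exact: EP0.
    + by move=> i; rewrite hdT subrr; exact: EP0.
  apply: (z (dd' x - dd x)) => // n.
  have -> : dd' x - dd x = (dd' x - dn n x) - (dd x - dn n x) by ring.
  apply: EPB; last exact: hdd.
  exact: (uniq_level hT hm (hdn n) (v' n)).
Qed.
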